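(* Let $(C_X,C_Z)$ be a GF(4) CSS code of length $n$ and distance $d$. Then $S'_X\perp S'_Z$, so $(S'_X,S'_Z)$ defines a CSS qubit code on $4n$ qubits, and its distance is at least $2d$.
   Context: $\mathrm{GF}(4)=\{0,1,\omega,\omega^2\}$ with $\omega^2=\omega+1$. A GF(4) CSS code of length $n$ is a pair of $\mathrm{GF}(4)$-linear subspaces $C_X,C_Z\subseteq\mathrm{GF}(4)^n$ with $\sum_ju_jv_j=0$ for all $u\in C_X$, $v\in C_Z$; with $C^\perp$ the Euclidean dual over GF(4) and $\mathrm{wt}$ the number of nonzero coordinates, $d_X=\min\{\mathrm{wt}(u):u\in C_Z^\perp\setminus C_X\}$, $d_Z=\min\{\mathrm{wt}(u):u\in C_X^\perp\setminus C_Z\}$, $d=\min(d_X,d_Z)$. Define $\mathbb F_2$-linear maps $\phi_X,\phi_Z:\mathrm{GF}(4)\to\mathbb F_2^4$ by $\phi_X(0)=0000$, $\phi_X(\omega)=1100$, $\phi_X(\omega^2)=1010$, $\phi_X(1)=0110$ and $\phi_Z(0)=0000$, $\phi_Z(\omega^2)=0011$, $\phi_Z(\omega)=0101$, $\phi_Z(1)=0110$ (binarization in the basis $\{\omega,\omega^2\}$ followed by encoding each qubit pair in the $[[4,2,2]]$ code). For $u\in\mathrm{GF}(4)^n$ let $\Phi_X(u)=(\phi_X(u_1),\dots,\phi_X(u_n))\in\mathbb F_2^{4n}$, similarly $\Phi_Z$. Let $B_j\in\mathbb F_2^{4n}$ be the all-ones indicator of the $j$-th block of 4 coordinates. Set $S'_X=\Phi_X(C_X)+\mathrm{span}\{B_1,\dots,B_n\}$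 and $S'_Z=\Phi_Z(C_Z)+\mathrm{span}\{B_1,\dots,B_n\}$ as the $X$- and $Z$-stabilizer spaces. The qubit code distance is $\min(d'_X,d'_Z)$ with $d'_X=\min\{|v|:v\in S_Z'^{\perp}\setminus S'_X\}$ and $d'_Z=\min\{|v|:v\in S_X'^{\perp}\setminus S'_Z\}$. *)

(* Defs.v *)
From HB Require Import structures.
From mathcomp Require Import all_boot all_order all_algebra.
Set Implicit Arguments. Unset Strict Implicit. Unset Printing Implicit Defensive.
Import GRing.Theory.
Local Open Scope ring_scope.

Inductive GF4 := G0 | G1 | Gw | Gw2.

Definition GF4_to (x : GF4) : 'I_4 :=
  match x with G0 => inord 0 | G1 => inord 1 | Gw => inord 2 | Gw2 => inord 3 end.
Definition GF4_of (i : 'I_4) : GF4 :=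
  match val i with 0 => G0 | 1 => G1 | 2 => Gw | _ => Gw2 end%N.
Lemma GF4_toK : cancel GF4_to GF4_of.
Proof. by case; rewrite /GF4_of /= inordK. Qed.
HB.instance Definition _ := Equality.copy GF4 (can_type GF4_toK).
HB.instance Definition _ := Finite.copy GF4 (can_type GF4_toK).

Definition add4 (x y : GF4) : GF4 :=
  match x, y with
  | G0, z | z, G0 => z
  | G1, G1 | Gw, Gw | Gw2, Gw2 => G0
  | G1, Gw | Gw, G1 => Gw2
  | G1, Gw2 | Gw2, G1 => Gw
  | Gw, Gw2 | Gw2, Gw => G1
  end.
Definition mul4 (x y : GF4) : GF4 :=
  match x, y with
  | G0, _ | _, G0 => G0
  | G1, z | z, G1 => z
  | Gw, Gw => Gw2
  | Gw2, Gw2 => Gw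
  | Gw, Gw2 | Gw2, Gw => G1
  end.
Definition inv4 (x : GF4) : GF4 :=
  match x with G0 => G0 | G1 => G1 | Gw => Gw2 | Gw2 => Gw end.

Fact add4A : associative add4. Proof. by move=> [] [] []. Qed.
Fact add4C : commutative add4. Proof. by move=> [] []. Qed.
Fact add40 : left_id G0 add4. Proof. by case. Qed.
Fact add4N : left_inverse G0 id add4. Proof. by case. Qed.
HB.instance Definition _ := GRing.isZmodule.Build GF4 add4A add4C add40 add4N.
Fact mul4A : associative mul4. Proof. by move=> [] [] []. Qed.
Fact mul4C : commutative mul4. Proof. by move=> [] []. Qed.
Fact mul41 : left_id G1 mul4. Proof. by case. Qed.
Fact mul4Dl : left_distributive mul4 add4. Proof. by move=> [] [] []. Qed.
Fact one4_neq0 : G1 != G0. Proof. by apply/eqP. Qed.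
HB.instance Definition _ :=
  GRing.Zmodule_isComNzRing.Build GF4 mul4A mul4C mul41 mul4Dl one4_neq0.
Fact mulV4 : forall x : GF4, x != 0 -> inv4 x * x = 1. Proof. by case=> //; rewrite eqxx. Qed.
Fact inv40 : inv4 0 = 0. Proof. by []. Qed.
HB.instance Definition _ := GRing.ComNzRing_isField.Build GF4 mulV4 inv40.

Definition gw : GF4 := Gw.
Lemma gw_sqr : gw ^+ 2 = gw + 1. Proof. by []. Qed.

Definition dot4 n (u v : 'rV[GF4]_n) : GF4 := \sum_(j < n) u 0 j * v 0 j.

Definition in_dual4 n (C : {vspace 'rV[GF4]_n}) (u : 'rV[GF4]_n) : Prop :=
  forall v, v \in C -> dot4 u v = 0.

Definition wt4 n (u : 'rV[GF4]_n) : nat := #|[set j : 'I_n | u 0 j != 0]|.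

Notation qvec n := {ffun 'I_n * 'I_4 -> 'F_2}.

Definition dot2 n (v w : qvec n) : 'F_2 := \sum_(i : 'I_n * 'I_4) v i * w i.
Definition wt2 n (v : qvec n) : nat := #|[set i | v i != 0]|.

Definition bits4 (b0 b1 b2 b3 : 'F_2) : 'I_4 -> 'F_2 :=
  fun a => match val a with 0 => b0 | 1 => b1 | 2 => b2 | _ => b3 end%N.

Definition phiX (x : GF4) : 'I_4 -> 'F_2 :=
  match x with
  | G0 => bits4 0 0 0 0
  | Gw => bits4 1 1 0 0
  | Gw2 => bits4 1 0 1 0
  | G1 => bits4 0 1 1 0
  end.
Definition phiZ (x : GF4) : 'I_4 -> 'F_2 :=
  match x with
  | G0 => bits4 0 0 0 0
  | Gw2 => bits4 0 0 1 1
  | Gw => bits4 0 1 0 1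
  | G1 => bits4 0 1 1 0
  end.

Definition PhiX n (u : 'rV[GF4]_n) : qvec n := [ffun i => phiX (u 0 i.1) i.2].
Definition PhiZ n (u : 'rV[GF4]_n) : qvec n := [ffun i => phiZ (u 0 i.1) i.2].

Definition Bblk n (j : 'I_n) : qvec n := [ffun i => if i.1 == j then 1 else 0].

Definition in_Sprime n (Phi : 'rV[GF4]_n -> qvec n) (C : {vspace 'rV[GF4]_n})
    (v : qvec n) : Prop :=
  exists u, exists c : 'I_n -> 'F_2,
    u \in C /\ v = Phi u + \sum_(j < n) [ffun i => c j * Bblk j i].

Definition in_SXp n (CX : {vspace 'rV[GF4]_n}) := in_Sprime (@PhiX n) CX.
Definition in_SZp n (CZ : {vspace 'rV[GF4]_n}) := in_Sprime (@PhiZ n) CZ.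

Definition in_dual2 n (S : qvec n -> Prop) (v : qvec n) : Prop :=
  forall w, S w -> dot2 v w = 0.

(* Main.v *)
Require Import Defs.
From HB Require Import structures.
From mathcomp Require Import all_boot all_order all_algebra.
Set Implicit Arguments. Unset Strict Implicit.
Import GRing.Theory.
Local Open Scope ring_scope.

Lemma F2_cases (x : 'F_2) : x = 0 \/ x = 1.
Proof. case: x => [[|[|m]] Hm]; [left|right|by []]; exact/val_inj. Qed.

Definition tr4 (x : GF4) : 'F_2 := match x with G0 | G1 => 0 | _ => 1 end.
Lemma tr4D : {morph tr4 : x y / x + y}.
Proof. by move=> [] []; apply/eqP. Qed.
Lemma tr4_sum n (f : 'I_n -> GF4) : tr4 (\sum_j f j) = \sum_j tr4 (f j).
Proof. exact: (big_morph tr4 tr4D). Qed.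
Lemma tr4_zero x : tr4 x = 0 -> tr4 (gw * x) = 0 -> x = 0.
Proof. by case: x => //; move/eqP. Qed.

Lemma blkXZ a b (c c' : 'F_2) :
  \sum_(k < 4) (phiX a k + c) * (phiZ b k + c') = tr4 (a * b).
Proof.
case: (F2_cases c) => ->; case: (F2_cases c') => ->; case: a; case: b;
rewrite !big_ord_recr big_ord0 /=; apply/eqP; by [].
Qed.
Lemma blkZX a b (c c' : 'F_2) :
  \sum_(k < 4) (phiZ a k + c) * (phiX b k + c') = tr4 (a * b).
Proof.
case: (F2_cases c) => ->; case: (F2_cases c') => ->; case: a; case: b;
rewrite !big_ord_recr big_ord0 /=; apply/eqP; by [].
Qed.

Lemma card_setP (T:finType) (P : pred T): #|[set x | P x]| = (\sum_x P x)%N.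
Proof. rewrite -sum1_card big_mkcond; apply eq_bigr => x _; rewrite inE; by case: P. Qed.

Lemma sumB n (c : 'I_n -> 'F_2) i :
  (\sum_(j < n) [ffun i => c j * Bblk j i]) i = c i.1.
Proof.
rewrite sum_ffunE (bigD1 i.1) //= !ffunE eqxx mulr1 big1 ?addr0 // => j Hj.
by rewrite !ffunE eq_sym (negbTE Hj) mulr0.
Qed.

Lemma dot2E n (v w : qvec n) :
  dot2 v w = \sum_(j < n) \sum_(k < 4) v (j, k) * w (j, k).
Proof. rewrite /dot2 pair_bigA; by apply: eq_bigr => -[j k]. Qed.

Lemma wt2E n (v : qvec n) :
  wt2 v = (\sum_(j < n) \sum_(k < 4) (v (j, k) != 0%R))%N.
Proof. rewrite /wt2 card_setP pair_bigA; by apply: eq_bigr => -[j k]. Qed.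

Definition Sp (phi : GF4 -> 'I_4 -> 'F_2) n (C : {vspace 'rV[GF4]_n}) :=
  in_Sprime (fun u : 'rV[GF4]_n => [ffun i => phi (u 0 i.1) i.2]) C.

Lemma dot2_tr (phi psi : GF4 -> 'I_4 -> 'F_2)
  (Hblk : forall a b c c', \sum_(k < 4) (phi a k + c) * (psi b k + c') = tr4 (a * b))
  n (v w : qvec n) (u u' : 'rV[GF4]_n) (c c' : 'I_n -> 'F_2) :
  (forall i, v i = phi (u 0 i.1) i.2 + c i.1) ->
  (forall i, w i = psi (u' 0 i.1) i.2 + c' i.1) ->
  dot2 v w = tr4 (dot4 u u').
Proof.
move=> Hv Hw; rewrite dot2E /dot4 tr4_sum; apply eq_bigr => j _.
rewrite -(Hblk _ _ (c j) (c' j)); apply eq_bigr => k _; by rewrite Hv Hw.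
Qed.

Lemma orth_gen (phi psi : GF4 -> 'I_4 -> 'F_2)
  (Hblk : forall a b c c', \sum_(k < 4) (phi a k + c) * (psi b k + c') = tr4 (a * b))
  n (C1 C2 : {vspace 'rV[GF4]_n})
  (Horth : forall u v, u \in C1 -> v \in C2 -> dot4 u v = 0) v w :
  Sp phi C1 v -> Sp psi C2 w -> dot2 v w = 0.
Proof.
move=> [u [c [Hu ->]]] [u' [c' [Hu' ->]]].
rewrite (@dot2_tr phi psi Hblk n _ _ u u' c c') ?Horth // => i; by rewrite !ffunE sumB.
Qed.
Lemma bitsE (x : 'I_4 -> 'F_2) k :
  x k = bits4 (x (inord 0)) (x (inord 1)) (x (inord 2)) (x (inord 3)) k.
Proof.
case: k => [[|[|[|[|m]]]] Hk] //=; congr x; apply/val_inj; by rewrite /= inordK.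
Qed.
Lemma sum4E (x : 'I_4 -> 'F_2) :
  \sum_(k < 4) x k = x (inord 0) + x (inord 1) + x (inord 2) + x (inord 3).
Proof. rewrite (eq_bigr _ (fun k _ => bitsE x k)) !big_ord_recr big_ord0 /=. by rewrite add0r. Qed.

Definition daX (b0 b1 b2 b3 : 'F_2) : GF4 :=
  if b0 + b3 == 0 then (if b1 + b3 == 0 then G0 else G1)
  else (if b1 + b3 == 0 then Gw2 else Gw).
Definition daZ (b0 b1 b2 b3 : 'F_2) : GF4 :=
  if b1 + b0 == 0 then (if b2 + b0 == 0 then G0 else Gw2)
  else (if b2 + b0 == 0 then Gw else G1).

Lemma decX b0 b1 b2 b3 : b0 + b1 + b2 + b3 = 0 ->
  forall k, bits4 b0 b1 b2 b3 k = phiX (daX b0 b1 b2 b3) k + b3.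
Proof.
case: (F2_cases b0) => ->; case: (F2_cases b1) => ->;
case: (F2_cases b2) => ->; case: (F2_cases b3) => -> H; try (by move/eqP: H);
case => [[|[|[|[|m]]]] Hk] //=; apply/eqP; by [].
Qed.
Lemma decZ b0 b1 b2 b3 : b0 + b1 + b2 + b3 = 0 ->
  forall k, bits4 b0 b1 b2 b3 k = phiZ (daZ b0 b1 b2 b3) k + b0.
Proof.
case: (F2_cases b0) => ->; case: (F2_cases b1) => ->;
case: (F2_cases b2) => ->; case: (F2_cases b3) => -> H; try (by move/eqP: H);
case => [[|[|[|[|m]]]] Hk] //=; apply/eqP; by [].
Qed.
Lemma wtX a (c : 'F_2) : a != 0 -> (2 <= \sum_(k < 4) ((phiX a k + c)%R != 0%R))%N.
Proof.
case: (F2_cases c) => ->; case: a => H; try by case/negP: H.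
all: rewrite !big_ord_recr big_ord0 /=; by [].
Qed.
Lemma wtZ a (c : 'F_2) : a != 0 -> (2 <= \sum_(k < 4) ((phiZ a k + c)%R != 0%R))%N.
Proof.
case: (F2_cases c) => ->; case: a => H; try by case/negP: H.
all: rewrite !big_ord_recr big_ord0 /=; by [].
Qed.
Lemma X0 k : phiX 0 k = 0. Proof. by case: k => [[|[|[|[|m]]]] Hk]. Qed.
Lemma Z0 k : phiZ 0 k = 0. Proof. by case: k => [[|[|[|[|m]]]] Hk]. Qed.

Lemma dist_gen (phi psi : GF4 -> 'I_4 -> 'F_2)
  (da : 'F_2 -> 'F_2 -> 'F_2 -> 'F_2 -> GF4)
  (dc : 'F_2 -> 'F_2 -> 'F_2 -> 'F_2 -> 'F_2)
  (Hdec : forall b0 b1 b2 b3, b0 + b1 + b2 + b3 = 0 ->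
     forall k, bits4 b0 b1 b2 b3 k = phi (da b0 b1 b2 b3) k + dc b0 b1 b2 b3)
  (Hblk : forall a b c c', \sum_(k < 4) (phi a k + c) * (psi b k + c') = tr4 (a * b))
  (Hwt : forall a (c : 'F_2), a != 0 -> (2 <= \sum_(k < 4) ((phi a k + c)%R != 0%R))%N)
  (Hpsi0 : forall k, psi 0 k = 0)
  n d (C1 C2 : {vspace 'rV[GF4]_n})
  (Hd : forall u, in_dual4 C2 u -> u \notin C1 -> (d <= wt4 u)%N) v :
  in_dual2 (Sp psi C2) v -> ~ Sp phi C1 v -> (2 * d <= wt2 v)%N.
Proof.
move=> Hv Hnot.
pose x j := fun k => v (j, k).
have Hb0 : forall j, \sum_(k < 4) x j k = 0.
  move=> j.
  have Hw : Sp psi C2 [ffun i : 'I_n * 'I_4 => if i.1 == j then 1 else 0].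
    exists 0, (fun j' => if j' == j then 1 else 0); split; first exact: mem0v.
    apply/ffunP => i; by rewrite !ffunE sumB mxE Hpsi0 add0r.
  have := Hv _ Hw; rewrite dot2E (bigD1 j) //= [X in _ + X = _]big1.
    rewrite addr0 => H; apply: (etrans _ H); apply eq_bigr => k _; by rewrite ffunE /= eqxx mulr1.
  move=> j' Hj'; apply big1 => k _; by rewrite ffunE /= (negbTE Hj') mulr0.
pose a j := da (x j (inord 0)) (x j (inord 1)) (x j (inord 2)) (x j (inord 3)).
pose c j := dc (x j (inord 0)) (x j (inord 1)) (x j (inord 2)) (x j (inord 3)).
pose u : 'rV[GF4]_n := \row_j a j.
have Hvi : forall i, v i = phi (u 0 i.1) i.2 + c i.1.
  move=> [j k]; rewrite mxE /=.
  have -> : v (j, k) = x j k by [].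
  rewrite bitsE; apply: Hdec; by rewrite -sum4E.
have Hu : u \notin C1.
  apply/negP => Hu; apply: Hnot; exists u, c; split => //.
  apply/ffunP => i; by rewrite !ffunE sumB Hvi.
have Hdual : in_dual4 C2 u.
  move=> w Hw.
  have H : forall l, tr4 (l * dot4 u w) = 0.
    move=> l.
    have HS : Sp psi C2 [ffun i : 'I_n * 'I_4 => psi ((l *: w) 0 i.1) i.2].
      exists (l *: w), (fun _ => 0); split; first exact: memvZ.
      apply/ffunP => i; by rewrite !ffunE sumB addr0.
    have E : dot2 v [ffun i : 'I_n * 'I_4 => psi ((l *: w) 0 i.1) i.2]
        = tr4 (dot4 u (l *: w)).
      apply: (dot2_tr Hblk (c:=c) (c':=fun _ => 0)) => // i; by rewrite ffunE addr0.
    apply: (etrans _ (Hv _ HS)); rewrite E; congr tr4; rewrite /dot4 mulr_sumr; apply eq_bigr => j _.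
    by rewrite !mxE mulrCA.
  apply: tr4_zero; [rewrite -(mul1r (dot4 u w)) | ]; exact: H.
have Hdu := Hd u Hdual Hu.
apply: (@leq_trans (2 * wt4 u)); first by rewrite leq_mul2l Hdu orbT.
rewrite wt2E /wt4 card_setP big_distrr /=.
apply: leq_sum => j _.
have E : (\sum_(k < 4) (v (j, k) != 0%R) = \sum_(k < 4) ((phi (u 0%R j) k + c j)%R != 0%R))%N.
  by apply eq_bigr => k _; rewrite Hvi.
rewrite E; case: (boolP (u 0%R j != 0%R)) => Hj; last by rewrite muln0.
by rewrite muln1 Hwt.
Qed.

Theorem mainTheorem15 (n d : nat) (CX CZ : {vspace 'rV[GF4]_n}) :
  (forall u v, u \in CX -> v \in CZ -> dot4 u v = 0) ->
  (forall u, in_dual4 CZ u -> u \notin CX -> (d <= wt4 u)%N) ->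
  (forall u, in_dual4 CX u -> u \notin CZ -> (d <= wt4 u)%N) ->
  (forall v w, in_SXp CX v -> in_SZp CZ w -> dot2 v w = 0)
  /\
  (forall v, in_dual2 (in_SZp CZ) v -> ~ in_SXp CX v -> (2 * d <= wt2 v)%N)
  /\
  (forall v, in_dual2 (in_SXp CX) v -> ~ in_SZp CZ v -> (2 * d <= wt2 v)%N).
Proof.
move=> Horth HdX HdZ; split; [|split].
- move=> v w; exact: (orth_gen blkXZ Horth).
- move=> v; exact: (dist_gen decX blkXZ wtX Z0 HdX).
- move=> v; apply: (dist_gen decZ blkZX wtZ X0 HdZ).
Qed.
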